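(* Let $A\in\mathbb{R}^{n\times n}$, $B\in\mathbb{R}^{n\times m}$, $Q=Q^T\succeq0$, $R=R^T\succ0$, and consider $\dot{\mathbf{x}}=A\mathbf{x}+B\mathbf{u}$, $\mathbf{x}(t_0)=\mathbf{x}_0$, with cost $J(\mathbf{u})=\int_{t_0}^\infty(\mathbf{x}^TQ\mathbf{x}+\mathbf{u}^TR\mathbf{u})dt$ and optimal cost $J^*$. Let $\Gamma(X)=A^TX+XA+Q$ and $\Upsilon(\Psi,\Phi)=(\Psi+\Psi^T)BR^{-1}B^T(\Phi+\Phi^T)$. Let $P\in\mathbb{R}^{n\times n}$ and $\bar P=\bar P^T\succ0$ satisfy $$\begin{bmatrix}\Gamma(P) & (P+P^T)B & 0&0\\ B^T(P+P^T) & 4R&0&0\\ 0&0&-\Gamma(\bar P) & (P+P^T-\bar P-\bar P^T)B\\ 0&0&B^T(P+P^T-\bar P-\bar P^T) & 4R\end{bmatrix}\succ0,$$ suppose $A-\tfrac12\Upsilon(I,P)$ is Hurwitz, and suppose the function $s(\mathbf{x},\mathbf{u})=\frac{\partial q}{\partial\mathbf{x}}(A\mathbf{x}+B\mathbf{u})+\mathbf{x}^TQ\mathbf{x}+\mathbf{u}^TR\mathbf{u}$ with $q(\mathbf{x})=\mathbf{x}^T(P-\bar P)\mathbf{x}$ is strictly convex in $(\mathbf{x},\mathbf{u})$. Then: (1) $q=\mathbf{x}^T(P-\bar P)\mathbf{x}$ is a solving function for the $\epsilon$-suboptimal LQR problem; (2) the control law $\mathbf{u}=-\tfrac12R^{-1}B^T(P+P^T)\mathbf{x}$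 is $\epsilon$-suboptimal with $\epsilon=\mathbf{x}_0^T\bar P\mathbf{x}_0-J^*$, i.e. $J(\mathbf{u})<\mathbf{x}_0^T\bar P\mathbf{x}_0$.
   Context: Matrix inequalities are in the Loewner sense. A control law is $\epsilon$-suboptimal if its cost satisfies $J(\mathbf{u})<J^*+\epsilon$. Krotov framework: for a Krotov function $q(\mathbf{x},t)$ the cost is rewritten as $q(\mathbf{x}_0,t_0)+\int s\,dt+s_f$ with $s=\partial q/\partial t+\frac{\partial q}{\partial\mathbf{x}}(A\mathbf{x}+B\mathbf{u})+\mathbf{x}^TQ\mathbf{x}+\mathbf{u}^TR\mathbf{u}$, $s_f=-q(\mathbf{x}(t_f),t_f)$, $t_f\to\infty$; $q$ is called a solving function whenever an optimal or suboptimal process is obtained directly (noniteratively) from it. Note $\Upsilon(I,P)=2BR^{-1}B^T(P+P^T)$. *)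

(* Defs.v *)
From HB Require Import structures.
From mathcomp Require Import all_boot all_order all_algebra.
From mathcomp Require Import all_classical all_reals all_analysis.
From mathcomp Require Import complex.
Set Implicit Arguments. Unset Strict Implicit. Unset Printing Implicit Defensive.
Import Order.TTheory GRing.Theory Num.Theory.
Local Open Scope ring_scope.

Definition qform (R : realType) (n : nat) (M : 'M[R]_n) (x : 'cV[R]_n) : R :=
  (x^T *m M *m x) 0 0.

(* M ≻ 0 : x^T M x > 0 for all x ≠ 0 (symmetry is imposed separately when the
   paper requires it). *)
Definition posdef (R : realType) (n : nat) (M : 'M[R]_n) : Prop :=
  forall x : 'cV[R]_n, x != 0 -> 0 < qform M x.

Definition possemidef (R : realType) (n : nat) (M : 'M[R]_n) : Prop :=
  forall x : 'cV[R]_n, 0 <= qform M x.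

Definition hurwitz (R : realType) (n : nat) (M : 'M[R]_n) : Prop :=
  forall z : R[i], eigenvalue (map_mx (@real_complex R) M) z -> Re z < 0.

Definition Gamma (R : realType) (n : nat) (A Q X : 'M[R]_n) : 'M[R]_n :=
  A^T *m X + X *m A + Q.

Definition Upsilon (R : realType) (n m : nat) (B : 'M[R]_(n, m)) (Rm : 'M[R]_m)
  (Psi Phi : 'M[R]_n) : 'M[R]_n :=
  (Psi + Psi^T) *m B *m invmx Rm *m B^T *m (Phi + Phi^T).

Definition lmi_matrix (R : realType) (n m : nat) (A : 'M[R]_n) (B : 'M[R]_(n, m))
  (Q : 'M[R]_n) (Rm : 'M[R]_m) (P Pb : 'M[R]_n) : 'M[R]_((n + m) + (n + m)) :=
  block_mx
    (block_mx (Gamma A Q P) ((P + P^T) *m B) (B^T *m (P + P^T)) (4%:R *: Rm))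
    0 0
    (block_mx (- Gamma A Q Pb) ((P + P^T - Pb - Pb^T) *m B)
              (B^T *m (P + P^T - Pb - Pb^T)) (4%:R *: Rm)).

(* s(x,u) = dq/dx (Ax+Bu) + x^T Q x + u^T R u with q(x) = x^T (P - Pb) x,
   so dq/dx = x^T ((P - Pb) + (P - Pb)^T). *)
Definition s_fun (R : realType) (n m : nat) (A : 'M[R]_n) (B : 'M[R]_(n, m))
  (Q : 'M[R]_n) (Rm : 'M[R]_m) (P Pb : 'M[R]_n) (x : 'cV[R]_n) (u : 'cV[R]_m) : R :=
  (x^T *m ((P - Pb) + (P - Pb)^T) *m (A *m x + B *m u)) 0 0
  + qform Q x + qform Rm u.

Definition strictly_convex_xu (R : realType) (n m : nat)
  (f : 'cV[R]_n -> 'cV[R]_m -> R) : Prop :=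
  forall (x1 x2 : 'cV[R]_n) (u1 u2 : 'cV[R]_m) (l : R),
    (x1 != x2 \/ u1 != u2) -> 0 < l -> l < 1 ->
    f (l *: x1 + (1 - l) *: x2) (l *: u1 + (1 - l) *: u2)
      < l * f x1 u1 + (1 - l) * f x2 u2.

Definition control_law (R : realType) (n m : nat) (B : 'M[R]_(n, m)) (Rm : 'M[R]_m)
  (P : 'M[R]_n) (x : 'cV[R]_n) : 'cV[R]_m :=
  - (2%:R^-1 *: (invmx Rm *m B^T *m (P + P^T) *m x)).

(* Infinite-horizon cost J(u) = ∫_{t0}^∞ (x^T Q x + u^T R u) dt, as an
   extended real (the integrand is nonnegative). *)
Definition cost (R : realType) (n m : nat) (Q : 'M[R]_n) (Rm : 'M[R]_m)
  (t0 : R) (x : R -> 'cV[R]_n) (u : R -> 'cV[R]_m) : \bar R :=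
  (\int[lebesgue_measure]_(t in `[t0, +oo[%classic) (qform Q (x t) + qform Rm (u t))%:E)%E.

(* Main.v *)
Require Import Defs.
From HB Require Import structures.
From mathcomp Require Import all_boot all_order all_algebra.
From mathcomp Require Import all_classical all_reals all_analysis.
From mathcomp Require Import complex.
From mathcomp Require Import ring lra.
From mathcomp Require Import measurable_realfun.
Import Order.TTheory GRing.Theory Num.Theory.
Local Open Scope ring_scope.

Section Aux.
Set Implicit Arguments.
Context {R : realType}.

Lemma is_derive_comp_mx (p q : nat) (y : R -> 'M[R]_(p, q)) t (dy : 'M[R]_(p, q)) :
  is_derive t (1 : R) y dy -> forall i j, is_derive t (1:R) (fun s => y s i j) (dy i j).
Proof.
move=> Hd i j.
have dy' : derivable y t 1 by case: Hd.
have dij := (derivable_mxP y t 1).1 dy' i j.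
apply: DeriveDef => //.
have := derive_mx dy'; rewrite derive_val => ->.
by rewrite mxE.
Qed.

Lemma is_derive_of_comp_mx (p q : nat) (y : R -> 'M[R]_(p, q)) t (dy : 'M[R]_(p, q)) :
  (forall i j, is_derive t (1:R) (fun s => y s i j) (dy i j)) -> is_derive t (1 : R) y dy.
Proof.
move=> H.
have dy' : derivable y t 1.
  by apply/derivable_mxP => i j; case: (H i j).
apply: DeriveDef => //.
rewrite derive_mx //; apply/matrixP => i j; rewrite mxE.
by rewrite derive_val.
Qed.


Lemma is_derive_sumf (k : nat) (h : 'I_k -> R -> R) t (dh : 'I_k -> R) :
  (forall i, is_derive t (1:R) (h i) (dh i)) ->
  is_derive t (1:R) (fun s => \sum_(i < k) h i s) (\sum_(i < k) dh i).
Proof. by move=> H; rewrite -fct_sumE; apply: is_derive_sum. Qed.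

Lemma is_deriveMf (f g : R -> R) t (df dg : R) :
  is_derive t (1:R) f df -> is_derive t (1:R) g dg ->
  is_derive t (1:R) (fun s => f s * g s) (f t * dg + g t * df).
Proof. by move=> Hf Hg; have := is_deriveM Hf Hg. Qed.

Lemma is_derive_mulmxl (p q r : nat) (K : 'M[R]_(p, q)) (y : R -> 'M[R]_(q, r)) t
  (dy : 'M[R]_(q, r)) :
  is_derive t (1:R) y dy -> is_derive t (1:R) (fun s => K *m y s) (K *m dy).
Proof.
move=> H; apply: is_derive_of_comp_mx => i j.
have -> : (fun s => (K *m y s) i j) = (fun s => \sum_(k < q) (fun s => K i k * y s k j) s).
  by apply/funext => s; rewrite mxE.
rewrite mxE; apply: is_derive_sumf => k.
have := is_deriveMf (is_derive_cst (K i k) t 1) (is_derive_comp_mx H k j).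
by rewrite /cst mulr0 addr0 mulrC.
Qed.

Lemma dot_sum (k : nat) (a b : 'cV[R]_k) : (a^T *m b) 0 0 = \sum_(i < k) a i 0 * b i 0.
Proof. by rewrite mxE; apply: eq_bigr => i _; rewrite mxE. Qed.

Lemma is_derive_bf (k : nat) (M : 'M[R]_k) (y z : R -> 'cV[R]_k) t (dy dz : 'cV[R]_k) :
  is_derive t (1:R) y dy -> is_derive t (1:R) z dz ->
  is_derive t (1:R) (fun s => ((y s)^T *m M *m z s) 0 0)
    ((dy^T *m M *m z t) 0 0 + ((y t)^T *m M *m dz) 0 0).
Proof.
move=> Hy Hz.
have Hw := is_derive_mulmxl M Hz.
have -> : (fun s => ((y s)^T *m M *m z s) 0 0) =
   (fun s => \sum_(i < k) (fun s => y s i 0 * (M *m z s) i 0) s).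
  by apply/funext => s; rewrite -mulmxA dot_sum.
rewrite -!mulmxA !dot_sum -big_split /=.
apply: is_derive_sumf => i.
have := is_deriveMf (is_derive_comp_mx Hy i 0) (is_derive_comp_mx Hw i 0).
by rewrite addrC [_ * dy i 0]mulrC.
Qed.


Definition bf (p q : nat) (a : 'cV[R]_p) (M : 'M[R]_(p, q)) (b : 'cV[R]_q) : R :=
  (a^T *m M *m b) 0 0.

Lemma e00D (M N : 'M[R]_1) : (M + N) 0 0 = M 0 0 + N 0 0. Proof. by rewrite mxE. Qed.
Lemma e00N (M : 'M[R]_1) : (- M) 0 0 = - M 0 0. Proof. by rewrite mxE. Qed.
Lemma e00Z c (M : 'M[R]_1) : (c *: M) 0 0 = c * M 0 0. Proof. by rewrite mxE. Qed.

Lemma bfDm p q a (M1 M2 : 'M[R]_(p, q)) b : bf a (M1 + M2) b = bf a M1 b + bf a M2 b.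
Proof. by rewrite /bf mulmxDr mulmxDl e00D. Qed.
Lemma bfNm p q a (M : 'M[R]_(p, q)) b : bf a (- M) b = - bf a M b.
Proof. by rewrite /bf mulmxN mulNmx e00N. Qed.
Lemma bfBm p q a (M1 M2 : 'M[R]_(p, q)) b : bf a (M1 - M2) b = bf a M1 b - bf a M2 b.
Proof. by rewrite bfDm bfNm. Qed.
Lemma bfZm p q a c (M : 'M[R]_(p, q)) b : bf a (c *: M) b = c * bf a M b.
Proof. by rewrite /bf -scalemxAr -scalemxAl e00Z. Qed.
Lemma bfDl p q (a1 a2 : 'cV[R]_p) (M : 'M[R]_(p, q)) b : bf (a1 + a2) M b = bf a1 M b + bf a2 M b.
Proof. by rewrite /bf linearD /= !mulmxDl e00D. Qed.
Lemma bfDr p q a (M : 'M[R]_(p, q)) b1 b2 : bf a M (b1 + b2) = bf a M b1 + bf a M b2.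
Proof. by rewrite /bf mulmxDr e00D. Qed.
Lemma bfZl p q c (a : 'cV[R]_p) (M : 'M[R]_(p, q)) b : bf (c *: a) M b = c * bf a M b.
Proof. by rewrite /bf linearZ /= -!scalemxAl e00Z. Qed.
Lemma bfZr p q a (M : 'M[R]_(p, q)) c b : bf a M (c *: b) = c * bf a M b.
Proof. by rewrite /bf -scalemxAr e00Z. Qed.
Lemma bf_mulmx p q r a (M1 : 'M[R]_(p, q)) (M2 : 'M[R]_(q, r)) b :
  bf a (M1 *m M2) b = bf (M1^T *m a) M2 b.
Proof. by rewrite /bf trmx_mul trmxK !mulmxA. Qed.
Lemma bf_mulmxr p q r a (M1 : 'M[R]_(p, q)) (M2 : 'M[R]_(q, r)) b :
  bf a (M1 *m M2) b = bf a M1 (M2 *m b).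
Proof. by rewrite /bf !mulmxA. Qed.
Lemma bf_tr p q a (M : 'M[R]_(p, q)) b : bf a M b = bf b M^T a.
Proof.
rewrite /bf; have -> : b^T *m M^T *m a = (a^T *m M *m b)^T.
  by rewrite !trmx_mul trmxK mulmxA.
by rewrite [RHS]mxE.
Qed.
Lemma bf0l p q (M : 'M[R]_(p, q)) b : bf 0 M b = 0.
Proof. by rewrite /bf trmx0 !mul0mx mxE. Qed.
Lemma bf0r p q a (M : 'M[R]_(p, q)) : bf a M 0 = 0.
Proof. by rewrite /bf mulmx0 mxE. Qed.

Lemma qform_bf p (M : 'M[R]_p) a : qform M a = bf a M a.
Proof. by []. Qed.

Lemma bf_block p q (X : 'M[R]_p) (Y : 'M[R]_(p, q)) (Z : 'M[R]_(q, p)) (W : 'M[R]_q) a b :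
  bf (col_mx a b) (block_mx X Y Z W) (col_mx a b) =
  bf a X a + bf b Z a + bf a Y b + bf b W b.
Proof.
rewrite /bf tr_col_mx mul_row_block mul_row_col !mulmxDl !e00D.
by rewrite !addrA.
Qed.

End Aux.

Section Ana.
Context {R : realType}.
Local Open Scope classical_set_scope.
Import numFieldNormedType.Exports.

Lemma deriv_cont (f : R -> R) (df : R -> R) :
  (forall t, is_derive t (1:R) f (df t)) -> continuous f.
Proof.
move=> H t; apply: differentiable_continuous; apply/derivable1_diffP.
by case: (H t).
Qed.

Lemma meas_cont (f : R -> R) (D : set R) : continuous f -> measurable_fun D (EFin \o f).
Proof.
move=> cf; apply/measurable_EFinP.
exact: (measurable_funS measurableT (@subsetT _ D) (continuous_measurable_fun cf)).
Qed.

Lemma pos_int (g : R -> R) (a : R) : continuous g -> (forall t, 0 <= g t) -> 0 < g a ->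
  (0 < \int[lebesgue_measure]_(t in `[a, +oo[) (g t)%:E)%E.
Proof.
move=> cg g0 ga.
have ga2 : g a / 2%:R < g a by lra.
have := @cvgr_gt _ _ _ _ g (g a) (cg a) (g a / 2%:R) ga2.
move=> Hn; have [e /= e0 He] := (@nbhs_ballP R R^o a _).1 (Hn _).
set d := e / 2%:R.
have d0 : 0 < d by rewrite divr_gt0 // ltr0n.
have Hd t : a <= t -> t <= a + d -> g a / 2%:R < g t.
  move=> at1 t2; apply: He.
  rewrite /ball /= ltr_norml; rewrite /d in t2; apply/andP; split; lra.
have I1 : (0 < \int[lebesgue_measure]_(t in `[a, (a + d)%R]) (cst (g a / 2%:R)%:E t))%E.
  rewrite integral_cst //= lebesgue_measure_itv /= lte_fin ltrDl d0 /=.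
  rewrite -EFinB -EFinM lte_fin; apply: mulr_gt0; first by rewrite divr_gt0 // ltr0n.
  by rewrite addrC addKr.
have I2 : (\int[lebesgue_measure]_(t in `[a, (a + d)%R]) (cst (g a / 2%:R)%:E t) <=
    \int[lebesgue_measure]_(t in `[a, (a + d)%R]) (g t)%:E)%E.
  apply: ge0_le_integral => //.
  - by move=> t _; rewrite lee_fin /cst divr_ge0 // ltW.
  - exact: meas_cont.
  move=> t /= Ht; rewrite lee_fin ltW //.
  by move: Ht; rewrite in_itv /= => /andP [? ?]; apply: Hd.
have I3 : (\int[lebesgue_measure]_(t in `[a, (a + d)%R]) (g t)%:E <=
    \int[lebesgue_measure]_(t in `[a, +oo[) (g t)%:E)%E.
  apply: ge0_subset_integral => //.
  - exact: meas_cont.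
  - by move=> t _; rewrite lee_fin.
  by apply: subset_itvl; rewrite bnd_simp.
exact: (lt_le_trans I1 (le_trans I2 I3)).
Qed.


Lemma ereal_lem (a b : \bar R) (c : R) : (0 <= a)%E -> (0 < b)%E -> (a + b <= c%:E)%E -> (a < c%:E)%E.
Proof.
case: a => [a| |] //; case: b => [b| |] //=.
- rewrite !lee_fin !lte_fin => a0 b0 H; lra.
Qed.

Lemma is_deriveDf (f g : R -> R) t (df dg : R) :
  is_derive t (1:R) f df -> is_derive t (1:R) g dg ->
  is_derive t (1:R) (fun s => f s + g s) (df + dg).
Proof. by move=> Hf Hg; have := is_deriveD Hf Hg. Qed.

Lemma is_deriveNf (f : R -> R) t (df : R) :
  is_derive t (1:R) f df -> is_derive t (1:R) (fun s => - f s) (- df).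
Proof. by move=> Hf; have := is_deriveN Hf. Qed.

Lemma nondecr_deriv (F h : R -> R) : (forall t, is_derive t (1:R) F (h t)) ->
  (forall t, 0 <= h t) -> {homo F : x y / x <= y}.
Proof.
move=> HF h0 x y xy.
have cF := @deriv_cont F h HF.
have [c _ E] := MVT_segment xy (fun z _ => HF z) (continuous_subspaceT cF).
by rewrite -subr_ge0 E mulr_ge0 // subr_ge0.
Qed.


Lemma analysis_core (fl g Vf dfl dg dV : R -> R) (t0 : R) :
  (forall t, is_derive t (1:R) fl (dfl t)) -> (forall t, is_derive t (1:R) g (dg t)) ->
  (forall t, is_derive t (1:R) Vf (dV t)) ->
  (forall t, 0 <= fl t) -> (forall t, 0 <= g t) -> 0 < g t0 ->
  (forall t, 0 <= Vf t) -> (forall t, dV t = - (fl t + g t)) ->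
  (\int[lebesgue_measure]_(t in `[t0, +oo[) (fl t)%:E < (Vf t0)%:E)%E.
Proof.
move=> Hfl Hg HV fl0 g0 gt0 V0 dVE.
have cfl := @deriv_cont fl dfl Hfl.
have cg := @deriv_cont g dg Hg.
pose h t := fl t + g t.
have ch : continuous h by move=> t; apply: continuousD; [exact: cfl | exact: cg].
have h0 t : 0 <= h t by rewrite /h addr_ge0.
pose F t := - Vf t.
have HF t : is_derive t (1:R) F (h t).
  by have := is_deriveNf (HV t); rewrite dVE opprK.
have ndF := @nondecr_deriv F h HF h0.
have Fle0 t : F t <= 0 by rewrite /F oppr_le0.
have ubF : has_ubound (range F) by exists 0 => _ [t _ <-].
have cvgF := nondecreasing_cvgr ndF ubF.
set l := sup (range F) in cvgF.
have l0 : l <= 0 by apply: ge_sup; [exists (F 0), 0 | move=> _ [t _ <-]].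
have dF : forall t, t0 < t -> derivable F t 1 by move=> t _; case: (HF t).
have F'h : {in `]t0, +oo[%R, F^`() =1 h}.
  by move=> t _; rewrite derive1E; exact: derive_val.
have I := @ge0_continuous_FTC2y R h F t0 l (fun t _ => h0 t) (continuous_subspaceT ch) cvgF
  dF (cvg_at_right_filter (@deriv_cont F h HF t0)) F'h.
have ID : (\int[lebesgue_measure]_(t in `[t0, +oo[) (h t)%:E =
   \int[lebesgue_measure]_(t in `[t0, +oo[) (fl t)%:E +
   \int[lebesgue_measure]_(t in `[t0, +oo[) (g t)%:E)%E.
  rewrite -ge0_integralD //.
  - by move=> t _; rewrite lee_fin.
  - exact: meas_cont.
  - by move=> t _; rewrite lee_fin.
  - exact: meas_cont.
have Ipos := @pos_int g t0 cg g0 gt0.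
have Ifl0 : (0 <= \int[lebesgue_measure]_(t in `[t0, +oo[) (fl t)%:E)%E.
  by apply: integral_ge0 => t _; rewrite lee_fin.
have Hle : (\int[lebesgue_measure]_(t in `[t0, +oo[) (fl t)%:E +
   \int[lebesgue_measure]_(t in `[t0, +oo[) (g t)%:E <= (Vf t0)%:E)%E.
  by rewrite -ID I /F -EFinB lee_fin; lra.
apply: ereal_lem; [exact: Ifl0 | exact: Ipos | exact: Hle].
Qed.

End Ana.

Lemma Rm_unit (R : realType) (m : nat) (Rm : 'M[R]_m) : posdef Rm -> Rm \in unitmx.
Proof.
move=> HR; rewrite unitmxE unitfE; apply/negP => /det0P [v vn0 vR].
have : v^T != 0 by apply: contra vn0 => /eqP/(congr1 trmx); rewrite trmxK trmx0 => ->.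
move=> /HR; rewrite /qform trmxK vR mul0mx mxE ltxx //.
Qed.

Lemma col_mx_neq0 {R : realType} {p q r : nat} (a : 'M[R]_(p, r)) {b : 'M[R]_(q, r)} :
  b != 0 -> col_mx a b != 0.
Proof.
by move=> bn0; apply/eqP; rewrite -col_mx0 => /eq_col_mx [_ hb]; rewrite hb eqxx in bn0.
Qed.

Lemma col_mx_neq0l {R : realType} {p q r : nat} {a : 'M[R]_(p, r)} (b : 'M[R]_(q, r)) :
  a != 0 -> col_mx a b != 0.
Proof.
by move=> an0; apply/eqP; rewrite -col_mx0 => /eq_col_mx [ha _]; rewrite ha eqxx in an0.
Qed.

Lemma key_alg (R : realType) (n m : nat)
  (A : 'M[R]_n) (B : 'M[R]_(n, m)) (Q : 'M[R]_n) (Rm : 'M[R]_m)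
  (P Pb : 'M[R]_n) :
  Rm^T = Rm -> posdef Rm -> Pb^T = Pb ->
  posdef (lmi_matrix A B Q Rm P Pb) ->
  let Km := - (2%:R^-1 *: (invmx Rm *m B^T *m (P + P^T))) in
  let Kc := A + B *m Km in
  forall v : 'cV[R]_n, v != 0 ->
  0 < - (qform Q v + qform Rm (Km *m v)) - (bf (Kc *m v) Pb v + bf v Pb (Kc *m v)).
Proof.
move=> HRt HR HPb Hlmi Km Kc v vn0.
set u := Km *m v.
set w := 2%:R^-1 *: u.
set S := P + P^T.
have HS : S^T = S by rewrite /S linearD /= trmxK addrC.
have HBS : B^T *m S *m v = (- 2%:R) *: (Rm *m u).
  rewrite /u /Km mulNmx mulmxN -scalemxAl -scalemxAr !mulmxA mulmxV ?Rm_unit // mul1mx.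
  by rewrite scalerN scaleNr opprK scalerA mulfV ?scale1r // pnatr_eq0.
have H := Hlmi (col_mx 0 (col_mx v w)) (col_mx_neq0 _ (col_mx_neq0l _ vn0)).
move: H; rewrite qform_bf /lmi_matrix bf_block !bf0l !bf0r !add0r bf_block.
set N := P + P^T - Pb - Pb^T.
have HN : N = S - Pb - Pb^T by [].
have HNt : N^T = N.
  by rewrite HN !linearB /= trmxK HS HPb.
have sym1 (a : 'cV[R]_n) (b : 'cV[R]_n) : bf a Pb b = bf b Pb a.
  by rewrite bf_tr HPb.
have eS : bf u (B^T *m S) v = (- 2%:R) * bf u Rm u.
  by rewrite /bf -mulmxA HBS -scalemxAr mulmxA e00Z.
have eP : bf u (B^T *m Pb) v = bf v Pb (B *m u).
  by rewrite bf_mulmx trmxK sym1.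
have ePt : bf u (B^T *m Pb^T) v = bf v Pb (B *m u).
  by rewrite HPb eP.
have t1 : bf v (- Gamma A Q Pb) v = - (2%:R * bf v Pb (A *m v) + bf v Q v).
  rewrite bfNm /Gamma !bfDm bf_mulmx trmxK bf_mulmxr sym1.
  by rewrite mulr_natl mulr2n.
have t2 : bf w (B^T *m N) v = 2%:R^-1 * ((- 2%:R) * bf u Rm u - 2%:R * bf v Pb (B *m u)).
  rewrite /w bfZl HN !mulmxBr !bfBm eS eP ePt; congr (_ * _).
  lra.
have t3 : bf v (N *m B) w = bf w (B^T *m N) v.
  by rewrite bf_tr trmx_mul HNt.
have t4 : bf w (4%:R *: Rm) w = bf u Rm u.
  rewrite /w bfZm bfZl bfZr; lra.
have eK : Kc *m v = A *m v + B *m u by rewrite /Kc mulmxDl mulmxA.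
rewrite t1 t3 t2 t4 eK bfDl bfDr sym1 [bf (B *m u) _ _]sym1 !qform_bf.
set a1 := bf v Pb (A *m v); set b1 := bf v Pb (B *m u); set g1 := bf u Rm u.
set q1 := bf v Q v.
have h2 : (2%:R : R)^-1 * 2%:R = 1 by rewrite mulVf ?pnatr_eq0.
move=> H; rewrite -/u; lra.
Qed.

Theorem proposition5 (R : realType) (n m : nat)
  (A : 'M[R]_n) (B : 'M[R]_(n, m)) (Q : 'M[R]_n) (Rm : 'M[R]_m)
  (P Pb : 'M[R]_n) (t0 : R) (x0 : 'cV[R]_n) (x : R -> 'cV[R]_n) :
  Q^T = Q -> possemidef Q ->
  Rm^T = Rm -> posdef Rm ->
  Pb^T = Pb -> posdef Pb ->
  posdef (lmi_matrix A B Q Rm P Pb) ->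
  hurwitz (A - 2%:R^-1 *: Upsilon B Rm 1%:M P) ->
  strictly_convex_xu (s_fun A B Q Rm P Pb) ->
  x0 != 0 ->
  (* x is the closed-loop trajectory: x(t0) = x0, x' = A x + B u, u = control law *)
  x t0 = x0 ->
  (forall t : R, is_derive t (1 : R) x (A *m x t + B *m control_law B Rm P (x t))) ->
  (cost Q Rm t0 x (fun t => control_law B Rm P (x t)) < (qform Pb x0)%:E)%E.
Proof.
move=> HQt HQ HRt HR HPbt HPb Hlmi _ _ x0n0 Hx0 Hder.
have Hkey := key_alg HRt HR HPbt Hlmi.
set Km := - (2%:R^-1 *: (invmx Rm *m B^T *m (P + P^T))) in Hkey.
set Kc := A + B *m Km in Hkey.
have Hu v : control_law B Rm P v = Km *m v.
  by rewrite /control_law /Km mulNmx -scalemxAl.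
have Hd t : is_derive t (1:R) x (Kc *m x t).
  by have := Hder t; rewrite Hu /Kc mulmxDl mulmxA.
have HdK t : is_derive t (1:R) (fun s => Km *m x s) (Km *m (Kc *m x t)).
  exact: is_derive_mulmxl.
have HdC t : is_derive t (1:R) (fun s => Kc *m x s) (Kc *m (Kc *m x t)).
  exact: is_derive_mulmxl.
pose fl t := qform Q (x t) + qform Rm (Km *m x t).
pose dV t := bf (Kc *m x t) Pb (x t) + bf (x t) Pb (Kc *m x t).
pose Vf t := qform Pb (x t).
pose g t := - fl t - dV t.
pose h t := - dV t.
have HV t : is_derive t (1:R) Vf (dV t) := is_derive_bf Pb (Hd t) (Hd t).
have Hfl t : is_derive t (1:R) fl
    (((Kc *m x t)^T *m Q *m x t) 0 0 + ((x t)^T *m Q *m (Kc *m x t)) 0 0 +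
     (((Km *m (Kc *m x t))^T *m Rm *m (Km *m x t)) 0 0 +
      ((Km *m x t)^T *m Rm *m (Km *m (Kc *m x t))) 0 0)).
  apply: is_deriveDf; [exact: (is_derive_bf Q (Hd t) (Hd t)) | exact: (is_derive_bf Rm (HdK t) (HdK t))].
have HdV t : is_derive t (1:R) dV
   (((Kc *m (Kc *m x t))^T *m Pb *m x t) 0 0 + ((Kc *m x t)^T *m Pb *m (Kc *m x t)) 0 0 +
    (((Kc *m x t)^T *m Pb *m (Kc *m x t)) 0 0 + ((x t)^T *m Pb *m (Kc *m (Kc *m x t))) 0 0)).
  apply: is_deriveDf; [exact: (is_derive_bf Pb (HdC t) (Hd t)) | exact: (is_derive_bf Pb (Hd t) (HdC t))].
have Hg t := is_deriveDf (is_deriveNf (Hfl t)) (is_deriveNf (HdV t)).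
have qR0 (w : 'cV[R]_m) : 0 <= qform Rm w.
  have [->|wn0] := eqVneq w 0; first by rewrite qform_bf bf0l.
  exact/ltW/HR.
have qPb0 (w : 'cV[R]_n) : 0 <= qform Pb w.
  have [->|wn0] := eqVneq w 0; first by rewrite qform_bf bf0l.
  exact/ltW/HPb.
have fl0 t : 0 <= fl t by rewrite /fl addr_ge0.
have gpos t : x t != 0 -> 0 < g t by move=> xn0; exact: Hkey.
have g0 t : 0 <= g t.
  have [xt0|xn0] := eqVneq (x t) 0; last exact/ltW/gpos.
  by rewrite /g /fl /dV xt0 !mulmx0 !qform_bf !bf0l; lra.
have dVE t : dV t = - (fl t + g t) by rewrite /g; lra.
have Hc : cost Q Rm t0 x (fun t => control_law B Rm P (x t)) =
    (\int[lebesgue_measure]_(t in `[t0, +oo[%classic) (fl t)%:E)%E.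
  by apply: eq_integral => t _; rewrite Hu.
have xt0 : x t0 != 0 by rewrite Hx0.
rewrite Hc -Hx0.
apply: analysis_core.
- exact: fl0.
- exact: g0.
- exact: (gpos _ xt0).
- by move=> t; exact: qPb0.
- exact: dVE.
Qed.
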